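(* Consider the closed-loop system $\dot p_i=\mathrm{sat}(v_i^{\mathrm{ms}}(\mathbf p)+v_i^{\mathrm{cv}}(\mathbf p))$, $i=1,\dots,n$, defined in the context (with true masses $P_k(\mathbf p)$), and let $S\subset\mathbb{R}^d$ (the desired shape) be a closed convex set containing all sample points $q_1,\dots,q_m$. Then for every initial state $\mathbf p(t_0)\in\mathbb{R}^{dn}$ and every $i\in\{1,\dots,n\}$, $\operatorname{dist}(p_i(t),S)\to0$ as $t\to\infty$; i.e., all robots converge to the desired shape.
   Context: Setting: $n\ge2$ robots in $\mathbb{R}^d$, positions $p_i\in\mathbb{R}^d$, configuration $\mathbf p=[p_1^\top,\dots,p_n^\top]^\top\in\mathbb{R}^{dn}$; fixed sample points $q_1,\dots,q_m\in\mathbb{R}^d$; constants $\beta>0$, $\sigma_1>0$, $\sigma_2>0$, $\varepsilon\in(0,1)$, $r_{\mathrm{avoid}}>0$, $v_{\max}>0$. Mass: $P_k(\mathbf p)=\frac1n\sum_{i=1}^n e^{-\beta\|q_k-p_i\|^2}$. Meanshift command: $v_i^{\mathrm{ms}}(\mathbf p)=\dfrac{\frac{\sigma_1}{m}\sum_{k=1}^m P_k(\mathbf p)^{-1}e^{-\beta\|q_k-p_i\|^2}(q_k-p_i)}{\sum_{k=1}^m P_k(\mathbf p)^{-1}e^{-\beta\|q_k-p_i\|^2}}$. Repulsive term: $\tilde v_i^{\mathrm{cv}}=\sigma_2\sum_{j\ne i,\ \|p_i-p_j\|\le r_{\mathrm{avoid}}}\frac{r_{\mathrm{avoid}}-\|p_i-p_j\|}{\|p_i-p_j\|+\varepsilon}(p_i-p_j)$.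 With $\varphi=\min\{\|v_i^{\mathrm{ms}}\|^2/\varepsilon,1\}$, the gain is $\kappa_2=\varphi$ if $(v_i^{\mathrm{ms}})^\top\tilde v_i^{\mathrm{cv}}\ge0$ and $\kappa_2=\varphi\min\{-(1-\varepsilon)\|v_i^{\mathrm{ms}}\|^2/((v_i^{\mathrm{ms}})^\top\tilde v_i^{\mathrm{cv}}),1\}$ if $(v_i^{\mathrm{ms}})^\top\tilde v_i^{\mathrm{cv}}<0$; collision-avoidance command $v_i^{\mathrm{cv}}=\kappa_2\tilde v_i^{\mathrm{cv}}$. Saturation: $\mathrm{sat}(z)=v_{\max}z/\|z\|$ if $\|z\|>v_{\max}$, and $\mathrm{sat}(z)=z$ otherwise. *)

(* Defs.v *)
From HB Require Import structures.
From mathcomp Require Import all_boot all_order all_algebra.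
From mathcomp Require Import all_classical all_reals all_analysis.
Set Implicit Arguments. Unset Strict Implicit. Unset Printing Implicit Defensive.
Import Order.TTheory GRing.Theory Num.Theory.
Import numFieldNormedType.Exports.
Local Open Scope classical_set_scope.
Local Open Scope ring_scope.

Section Defs.
Variable R : realType.

Definition dotE d (u v : 'rV[R]_d) : R := \sum_(j < d) u 0 j * v 0 j.
Definition normE d (v : 'rV[R]_d) : R := Num.sqrt (dotE v v).

Definition distE d (x : 'rV[R]_d) (S : set 'rV[R]_d) : R :=
  inf [set normE (x - s) | s in S].

Definition convex_setE d (S : set 'rV[R]_d) : Prop :=
  forall x y, S x -> S y -> forall l : R, 0 <= l <= 1 ->
    S (l *: x + (1 - l) *: y).

Variables (d n m : nat) (q : 'I_m -> 'rV[R]_d).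
Variables (beta sigma1 sigma2 eps ravoid vmax : R).

Definition kw (x y : 'rV[R]_d) : R := expR (- beta * normE (x - y) ^+ 2).

Definition mass (p : 'I_n -> 'rV[R]_d) (k : 'I_m) : R :=
  n%:R^-1 * \sum_(i < n) kw (q k) (p i).

Definition v_ms (p : 'I_n -> 'rV[R]_d) (i : 'I_n) : 'rV[R]_d :=
  ((sigma1 / m%:R) / (\sum_(k < m) (mass p k)^-1 * kw (q k) (p i))) *:
    \sum_(k < m) ((mass p k)^-1 * kw (q k) (p i)) *: (q k - p i).

Definition v_rep (p : 'I_n -> 'rV[R]_d) (i : 'I_n) : 'rV[R]_d :=
  sigma2 *: \sum_(j < n | (j != i) && (normE (p i - p j) <= ravoid))
    ((ravoid - normE (p i - p j)) / (normE (p i - p j) + eps)) *: (p i - p j).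

Definition kappa2 (p : 'I_n -> 'rV[R]_d) (i : 'I_n) : R :=
  let vm := v_ms p i in
  let vr := v_rep p i in
  let phi := Num.min (normE vm ^+ 2 / eps) 1 in
  if 0 <= dotE vm vr then phi
  else phi * Num.min (- (1 - eps) * normE vm ^+ 2 / dotE vm vr) 1.

Definition v_cv (p : 'I_n -> 'rV[R]_d) (i : 'I_n) : 'rV[R]_d :=
  kappa2 p i *: v_rep p i.

Definition sat (z : 'rV[R]_d) : 'rV[R]_d :=
  if vmax < normE z then (vmax / normE z) *: z else z.

Definition closed_loop (p : 'I_n -> 'rV[R]_d) (i : 'I_n) : 'rV[R]_d :=
  sat (v_ms p i + v_cv p i).

End Defs.

(* Main.v *)
Require Import Defs.
From HB Require Import structures.
From mathcomp Require Import all_boot all_order all_algebra.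
From mathcomp Require Import all_classical all_reals all_analysis.
From mathcomp Require Import ring lra.
Import Order.TTheory GRing.Theory Num.Theory.
Import numFieldNormedType.Exports.
Local Open Scope classical_set_scope.
Local Open Scope ring_scope.



Lemma dotEC {R : realType} {d : nat} (u v : 'rV[R]_d) : dotE u v = dotE v u.
Proof. by apply: eq_bigr => j _; rewrite mulrC. Qed.

Lemma dotEDl {R : realType} {d : nat} (u v w : 'rV[R]_d) : dotE (u + v) w = dotE u w + dotE v w.
Proof. by rewrite /dotE -big_split; apply: eq_bigr => j _; rewrite !mxE mulrDl. Qed.

Lemma dotEZl {R : realType} {d : nat} a (u w : 'rV[R]_d) : dotE (a *: u) w = a * dotE u w.
Proof. by rewrite /dotE mulr_sumr; apply: eq_bigr => j _; rewrite !mxE mulrA. Qed.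

Lemma dotENl {R : realType} {d : nat} (u w : 'rV[R]_d) : dotE (- u) w = - dotE u w.
Proof. by rewrite -scaleN1r dotEZl mulN1r. Qed.

Lemma dotEBl {R : realType} {d : nat} (u v w : 'rV[R]_d) : dotE (u - v) w = dotE u w - dotE v w.
Proof. by rewrite dotEDl dotENl. Qed.

Lemma dotEZr {R : realType} {d : nat} a (u w : 'rV[R]_d) : dotE w (a *: u) = a * dotE w u.
Proof. by rewrite dotEC dotEZl dotEC. Qed.

Lemma dotEBr {R : realType} {d : nat} (u v w : 'rV[R]_d) : dotE w (u - v) = dotE w u - dotE w v.
Proof. by rewrite dotEC dotEBl !(dotEC w). Qed.

Lemma dotEDr {R : realType} {d : nat} (u v w : 'rV[R]_d) : dotE w (u + v) = dotE w u + dotE w v.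
Proof. by rewrite dotEC dotEDl !(dotEC w). Qed.

Lemma dotE0l {R : realType} {d : nat} (w : 'rV[R]_d) : dotE 0 w = 0.
Proof. by rewrite /dotE big1 // => j _; rewrite mxE mul0r. Qed.

Lemma dotE_suml {R : realType} {d m : nat} (F : 'I_m -> 'rV[R]_d) w :
  dotE (\sum_(k < m) F k) w = \sum_(k < m) dotE (F k) w.
Proof.
elim/big_rec2: _ => [|k x y _ <-]; first exact: dotE0l.
by rewrite dotEDl.
Qed.

Lemma dotE_sumlP {R : realType} {d m : nat} (P : pred 'I_m) (F : 'I_m -> 'rV[R]_d) w :
  dotE (\sum_(k < m | P k) F k) w = \sum_(k < m | P k) dotE (F k) w.
Proof.
elim/big_rec2: _ => [|k x y _ <-]; first exact: dotE0l.
by rewrite dotEDl.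
Qed.

Lemma dotE_ge0 {R : realType} {d : nat} (u : 'rV[R]_d) : 0 <= dotE u u.
Proof. by apply: sumr_ge0 => j _; rewrite -expr2 sqr_ge0. Qed.

Lemma normE_ge0 {R : realType} {d : nat} (u : 'rV[R]_d) : 0 <= normE u.
Proof. exact: sqrtr_ge0. Qed.

Lemma normE_sq {R : realType} {d : nat} (u : 'rV[R]_d) : normE u ^+ 2 = dotE u u.
Proof. by rewrite /normE sqr_sqrtr // dotE_ge0. Qed.

Lemma normE0_dot {R : realType} {d : nat} (u v : 'rV[R]_d) : normE u = 0 -> dotE u v = 0.
Proof.
move=> h; have h2 : dotE u u = 0 by rewrite -normE_sq h expr0n.
have hj : forall j, u 0 j = 0.
  move=> j; have hh : forall k : 'I_d, true -> 0 <= u 0 k * u 0 k.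
    by move=> k _; rewrite -expr2 sqr_ge0.
  have := @psumr_eq0P _ _ _ _ hh h2 j isT.
  by rewrite -expr2 => /eqP; rewrite sqrf_eq0 => /eqP.
by rewrite /dotE big1 // => j _; rewrite hj mul0r.
Qed.

Lemma CS {R : realType} {d : nat} (u v : 'rV[R]_d) : dotE u v <= normE u * normE v.
Proof.
have [hu|hu] := eqVneq (normE u) 0; first by rewrite normE0_dot // hu mul0r.
have [hv|hv] := eqVneq (normE v) 0.
  by rewrite dotEC normE0_dot // hv mulr0.
have h := @dotE_ge0 _ _ (normE v *: u - normE u *: v).
rewrite !(dotEBl, dotEZl, dotEBr, dotEZr) in h.
rewrite -!normE_sq (dotEC v u) in h.
have hp : 0 < normE u * normE v by rewrite mulr_gt0 // lt0r ?hu ?hv ?normE_ge0.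
have : 0 <= 2 * (normE u * normE v) * (normE u * normE v - dotE u v).
  by move: h; set a := normE u; set b := normE v; set c := dotE u v;
     move=> h; nra.
by rewrite pmulr_rge0 ?subr_ge0 // mulr_gt0.
Qed.

Lemma normE0 {R : realType} {d : nat} : normE (0 : 'rV[R]_d) = 0.
Proof. by rewrite /normE dotE0l sqrtr0. Qed.

Lemma normEZ {R : realType} {d : nat} a (u : 'rV[R]_d) : normE (a *: u) = `|a| * normE u.
Proof.
by rewrite /normE dotEZl dotEZr mulrA -expr2 sqrtrM ?sqr_ge0 // sqrtr_sqr.
Qed.

Lemma normEN {R : realType} {d : nat} (u : 'rV[R]_d) : normE (- u) = normE u.
Proof. by rewrite -scaleN1r normEZ normrN1 mul1r. Qed.

Lemma normEB {R : realType} {d : nat} (u v : 'rV[R]_d) : normE (u - v) = normE (v - u).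
Proof. by rewrite -normEN opprB. Qed.

Lemma normED {R : realType} {d : nat} (u v : 'rV[R]_d) : normE (u + v) <= normE u + normE v.
Proof.
have h : normE (u + v) ^+ 2 <= (normE u + normE v) ^+ 2.
  rewrite normE_sq dotEDl !dotEDr (dotEC v u) sqrrD -!normE_sq.
  by have := CS u v; set a := dotE u v; nra.
have := normE_ge0 (u + v); have := normE_ge0 u; have := normE_ge0 v.
by move: h; set a := normE (u + v); set b := normE u; set c := normE v; nra.
Qed.

Lemma normE_sum {R : realType} {d m : nat} (P : pred 'I_m) (F : 'I_m -> 'rV[R]_d) :
  normE (\sum_(k < m | P k) F k) <= \sum_(k < m | P k) normE (F k).
Proof.
elim/big_rec2: _ => [|k x y _ h]; first by rewrite normE0.
by apply: le_trans (normED _ _) _; rewrite lerD2l.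
Qed.

Lemma normE_wsum {R : realType} {d m : nat} (P : pred 'I_m) (a : 'I_m -> R)
  (F : 'I_m -> 'rV[R]_d) : (forall k, 0 <= a k) ->
  normE (\sum_(k < m | P k) a k *: F k) <= \sum_(k < m | P k) a k * normE (F k).
Proof.
move=> ha; apply: le_trans (normE_sum _ _) _.
by apply: ler_sum => k _; rewrite normEZ ger0_norm.
Qed.



Lemma kappa_prop {R : realType} {d : nat} (eps : R) (vm vr : 'rV[R]_d) :
  0 < eps < 1 ->
  let phi := Num.min (normE vm ^+ 2 / eps) 1 in
  let k := if 0 <= dotE vm vr then phi
    else phi * Num.min (- (1 - eps) * normE vm ^+ 2 / dotE vm vr) 1 in
  0 <= k <= 1 /\ eps * normE vm ^+ 2 <= dotE vm (vm + k *: vr).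
Proof.
move=> /andP[e0 e1] phi k.
have hphi : 0 <= phi <= 1.
  rewrite /phi; apply/andP; split; last by rewrite ge_min lexx orbT.
  by rewrite le_min ler01 andbT divr_ge0 ?sqr_ge0 // ltW.
rewrite dotEDr dotEZr -normE_sq.
have n0 := sqr_ge0 (normE vm).
rewrite /k; case: ifP => hd.
  split => //; move: hphi => /andP[? ?]; nra.
move/negbT: hd; rewrite -ltNge => hd.
set a := normE vm ^+ 2 in n0 *; set b := dotE vm vr in hd *.
set r := - (1 - eps) * a / b.
have r0 : 0 <= r.
  rewrite /r -mulrA mulNr mulrC -mulNr; apply: mulr_ge0; last by rewrite subr_ge0 ltW.
  by rewrite -mulrN mulr_ge0 // oppr_ge0 ltW // invr_lt0.
have hmin : 0 <= Num.min r 1 <= 1.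
  by rewrite le_min r0 ler01 ge_min lexx orbT.
have hrb : r * b = - (1 - eps) * a by rewrite /r mulfVK // lt_eqF.
have hmb : Num.min r 1 * b >= r * b.
  by rewrite ler_wnM2r ?ge_min ?lexx // ltW.
move: hphi hmin => /andP[p0 p1] /andP[m0 m1].
split; first by apply/andP; split; nra.
have h1 : phi * (Num.min r 1 * b) >= phi * (- (1 - eps) * a) by rewrite -hrb ler_wpM2l.
have h2 : 0 <= (1 - phi) * ((1 - eps) * a) by rewrite mulr_ge0 ?subr_ge0 // mulr_ge0 // subr_ge0 ltW.
rewrite -mulrA; lra.
Qed.

Lemma sat_prop {R : realType} {d : nat} (vmax : R) (z : 'rV[R]_d) : 0 < vmax ->
  exists f, [/\ sat vmax z = f *: z, 0 < f <= 1, vmax <= f * (vmax + normE z)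
     & normE (sat vmax z) <= vmax].
Proof.
move=> hv; rewrite /sat; case: ifP => h.
  have z0 : 0 < normE z by apply: lt_trans h.
  exists (vmax / normE z); split => //.
  - by apply/andP; split; [rewrite divr_gt0 | rewrite ler_pdivrMr // mul1r ltW].
  - rewrite mulrDr divfK ?gt_eqF //. 
    have : 0 <= vmax / normE z * vmax by rewrite mulr_ge0 ?divr_ge0 ?ltW.
    lra.
  - by rewrite normEZ ger0_norm ?divfK ?gt_eqF // divr_ge0 ?ltW.
exists 1; split => //; first by rewrite scale1r.
- by rewrite ltr01 lexx.
- by rewrite mul1r lerDl normE_ge0.
- by rewrite leNgt h.
Qed.

Lemma kw_gt0 {R : realType} {d : nat} b (x y : 'rV[R]_d) : 0 < kw b x y.
Proof. exact: expR_gt0. Qed.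

Lemma kw_le1 {R : realType} {d : nat} b (x y : 'rV[R]_d) : 0 <= b -> kw b x y <= 1.
Proof.
by move=> hb; rewrite /kw expR_le1 mulNr oppr_le0 mulr_ge0 ?sqr_ge0.
Qed.

Lemma kwE {R : realType} {d : nat} b (x y : 'rV[R]_d) :
  kw b x y = expR (- b * dotE (x - y) (x - y)).
Proof. by rewrite /kw normE_sq. Qed.

Lemma mass_gt0 {R : realType} {d n m : nat} (q : 'I_m -> 'rV[R]_d) b
  (P : 'I_n -> 'rV[R]_d) (i : 'I_n) k : 0 < mass q b P k.
Proof.
have n0 : (0 < n)%N := leq_ltn_trans (leq0n _) (ltn_ord i).
rewrite /mass mulr_gt0 // ?invr_gt0 ?ltr0n //.
by rewrite (bigD1 i) //= ltr_pwDl ?kw_gt0 // sumr_ge0 // => j _; rewrite ltW ?kw_gt0.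
Qed.

Lemma mass_le1 {R : realType} {d n m : nat} (q : 'I_m -> 'rV[R]_d) b
  (P : 'I_n -> 'rV[R]_d) (i : 'I_n) k : 0 <= b -> mass q b P k <= 1.
Proof.
move=> hb; have n0 : 0 < n%:R :> R by rewrite ltr0n (leq_ltn_trans (leq0n _) (ltn_ord i)).
rewrite /mass ler_pdivrMl // mulr1.
apply: le_trans (_ : \sum_(j < n) (1 : R) <= _).
  by apply: ler_sum => j _; exact: kw_le1.
by rewrite sumr_const card_ord.
Qed.

Lemma vrep_bound {R : realType} {d n : nat} (sigma2 eps ravoid : R)
  (P : 'I_n -> 'rV[R]_d) i : 0 < sigma2 -> 0 < eps -> 0 < ravoid ->
  normE (v_rep sigma2 eps ravoid P i) <= sigma2 * (n%:R * ravoid).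
Proof.
move=> s0 e0 r0; rewrite /v_rep normEZ.
rewrite (ger0_norm (ltW s0)) ler_pM2l //.
apply: le_trans (normE_sum _ _) _.
rewrite big_mkcond /=.
apply: le_trans (_ : \sum_(j < n) ravoid <= _); last by rewrite sumr_const card_ord mulr_natl.
apply: ler_sum => j _; case: ifP => [/andP[_ hj]|_]; last exact: ltW.
rewrite normEZ; set r := normE (P i - P j).
have r0' : 0 <= r := normE_ge0 _.
rewrite ger0_norm; last by rewrite divr_ge0 ?subr_ge0 // addr_ge0 // ltW.
rewrite mulrAC ler_pdivrMr ?ltr_wpDl //.
have : 0 <= ravoid - r by rewrite subr_ge0.
nra.
Qed.

Definition wgt {R : realType} {d n m : nat} (q : 'I_m -> 'rV[R]_d) (b : R)
  (P : 'I_n -> 'rV[R]_d) i k := (mass q b P k)^-1 * kw b (q k) (P i).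
Definition Wt {R : realType} {d n m : nat} (q : 'I_m -> 'rV[R]_d) (b : R)
  (P : 'I_n -> 'rV[R]_d) i := \sum_(k < m) wgt q b P i k.
Definition Uv {R : realType} {d n m : nat} (q : 'I_m -> 'rV[R]_d) (b : R)
  (P : 'I_n -> 'rV[R]_d) i := \sum_(k < m) wgt q b P i k *: (q k - P i).

Lemma v_msE {R : realType} {d n m : nat} (q : 'I_m -> 'rV[R]_d) (b s1 : R)
  (P : 'I_n -> 'rV[R]_d) i :
  v_ms q b s1 P i = ((s1 / m%:R) / Wt q b P i) *: Uv q b P i.
Proof. by []. Qed.

Lemma wgt_gt0 {R : realType} {d n m : nat} (q : 'I_m -> 'rV[R]_d) (b : R)
  (P : 'I_n -> 'rV[R]_d) i k : 0 < wgt q b P i k.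
Proof. by rewrite /wgt mulr_gt0 ?invr_gt0 ?kw_gt0 // (mass_gt0 _ _ _ i). Qed.

Lemma Wt_lb {R : realType} {d n m : nat} (q : 'I_m -> 'rV[R]_d) (b : R)
  (P : 'I_n -> 'rV[R]_d) i k : 0 <= b -> kw b (q k) (P i) <= Wt q b P i.
Proof.
move=> hb; rewrite /Wt (bigD1 k) //=; apply: ler_wpDr.
  by apply: sumr_ge0 => j _; apply: ltW; apply: wgt_gt0.
rewrite /wgt ler_peMl ?(ltW (kw_gt0 _ _ _)) //.
by rewrite invf_ge1 ?(mass_gt0 _ _ _ i) ?(mass_le1 _ _ _ i).
Qed.

Lemma Wt_gt0 {R : realType} {d n m : nat} (q : 'I_m -> 'rV[R]_d) (b : R)
  (P : 'I_n -> 'rV[R]_d) i (k : 'I_m) : 0 < Wt q b P i.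
Proof.
rewrite /Wt (bigD1 k) //= ltr_pwDl ?wgt_gt0 //.
by apply: sumr_ge0 => j _; apply: ltW; apply: wgt_gt0.
Qed.

Lemma vms_bound {R : realType} {d n m : nat} (q : 'I_m -> 'rV[R]_d) (b s1 : R)
  (P : 'I_n -> 'rV[R]_d) i : (0 < m)%N -> 0 < s1 ->
  normE (v_ms q b s1 P i) <= s1 / m%:R * \sum_(l < m) normE (q l - P i).
Proof.
move=> m0 s0; set Q := \sum_(l < m) _.
have W0 := Wt_gt0 q b P i (Ordinal m0).
have sm : 0 < s1 / m%:R by rewrite divr_gt0 // ltr0n.
rewrite v_msE normEZ (ger0_norm (divr_ge0 (ltW sm) (ltW W0))) -[_ / Wt _ _ _ _ * _]mulrA ler_pM2l //.
rewrite ler_pdivrMl //; apply: le_trans (normE_wsum _ _ _ _) _.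
  by move=> k; apply: ltW; apply: wgt_gt0.
rewrite /Wt mulr_suml; apply: ler_sum => k _; rewrite ler_pM2l ?wgt_gt0 //.
by rewrite /Q (bigD1 k) //= lerDl sumr_ge0 // => l _; apply: normE_ge0.
Qed.

Lemma vms_center {R : realType} {d n m : nat} (q : 'I_m -> 'rV[R]_d) (b s1 : R)
  (P : 'I_n -> 'rV[R]_d) i c : (0 < m)%N -> 0 < s1 ->
  dotE (P i - c) (v_ms q b s1 P i) <=
  s1 / m%:R * (normE (P i - c) * (\sum_(l < m) normE (q l - c) - normE (P i - c))).
Proof.
move=> m0 s0; set Q := \sum_(l < m) _; set x := P i - c.
have W0 := Wt_gt0 q b P i (Ordinal m0).
have sm : 0 < s1 / m%:R by rewrite divr_gt0 // ltr0n.
rewrite v_msE dotEZr -[_ / Wt _ _ _ _ * _]mulrA ler_pM2l // ler_pdivrMl //.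
rewrite /Uv dotEC dotE_suml /Wt mulr_suml.
apply: ler_sum => k _.
rewrite dotEZl ler_pM2l ?wgt_gt0 //.
have -> : q k - P i = (q k - c) - x by rewrite /x opprB addrA subrK.
rewrite dotEBl -normE_sq.
have := CS (q k - c) x; have : normE (q k - c) <= Q.
  by rewrite /Q (bigD1 k) //= lerDl sumr_ge0 // => l _; apply: normE_ge0.
have := normE_ge0 x.
set a := normE x; set e := normE (q k - c); set f := dotE (q k - c) x; nra.
Qed.

Lemma vms_qbar {R : realType} {d n m : nat} (q : 'I_m -> 'rV[R]_d) (b s1 : R)
  (P : 'I_n -> 'rV[R]_d) i : (0 < m)%N ->
  v_ms q b s1 P i = (s1 / m%:R) *: ((Wt q b P i)^-1 *: \sum_(k < m) wgt q b P i k *: q k - P i).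
Proof.
move=> m0; have W0 := Wt_gt0 q b P i (Ordinal m0).
rewrite v_msE -scalerA; congr (_ *: _).
rewrite /Uv; under eq_bigr do rewrite scalerBr.
rewrite sumrB scalerBr; congr (_ - _).
by rewrite -scaler_suml -/(Wt q b P i) scalerA mulVf ?gt_eqF // scale1r.
Qed.

Lemma conv_comb {R : realType} {d : nat} (S : set 'rV[R]_d) : convex_setE S ->
  forall m (w : 'I_m.+1 -> R) (x : 'I_m.+1 -> 'rV[R]_d),
  (forall k, 0 < w k) -> (forall k, S (x k)) ->
  S ((\sum_(k < m.+1) w k)^-1 *: \sum_(k < m.+1) w k *: x k).
Proof.
move=> hS; elim=> [|m IH] w x hw hx.
  by rewrite !big_ord1 scalerA mulVf ?gt_eqF // scale1r.
rewrite big_ord_recr /= [X in _ *: X]big_ord_recr /=.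
set A := \sum_(i < m.+1) w (widen_ord _ i).
set B := \sum_(i < m.+1) w (widen_ord _ i) *: x (widen_ord _ i).
have hX := IH (fun i => w (widen_ord (leqnSn _) i)) (fun i => x (widen_ord (leqnSn _) i))
  (fun k => hw _) (fun k => hx _).
rewrite -/A -/B in hX.
have A0 : 0 < A.
  by rewrite /A (bigD1 ord0) //= ltr_pwDl ?hw // sumr_ge0 // => j _; exact: ltW (hw _).
have wl := hw ord_max.
set l := A / (A + w ord_max).
have hl : 0 <= l <= 1.
  apply/andP; split; first by rewrite divr_ge0 // ltW // addr_gt0.
  by rewrite ler_pdivrMr ?addr_gt0 // mul1r lerDl ltW.
have := hS _ _ hX (hx ord_max) l hl.
congr S; rewrite !scalerA scalerDr scalerA; congr (_ + _).
  by rewrite /l mulrAC mulfV ?gt_eqF // mul1r.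
congr (_ *: _); rewrite /l -[X in X - _](@mulfV _ (A + w ord_max)) ?gt_eqF ?addr_gt0 //.
by rewrite -mulrBl addrAC subrr add0r mulrC.
Qed.

Lemma cl_decomp {R : realType} {d n m : nat} (q : 'I_m -> 'rV[R]_d)
  (b s1 s2 eps ra vmax : R) (P : 'I_n -> 'rV[R]_d) i :
  0 < eps < 1 -> 0 < vmax ->
  exists f k, let vm := v_ms q b s1 P i in let z := vm + k *: v_rep s2 eps ra P i in
  [/\ closed_loop q b s1 s2 eps ra vmax P i = f *: z, 0 < f <= 1,
     vmax <= f * (vmax + normE z), 0 <= k <= 1
   & eps * normE vm ^+ 2 <= dotE vm z] /\
  normE (closed_loop q b s1 s2 eps ra vmax P i) <= vmax.
Proof.
move=> he hv.
have [hk1 hk2] := kappa_prop eps (v_ms q b s1 P i) (v_rep s2 eps ra P i) he.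
have [f [e1 e2 e3 e4]] := sat_prop vmax (v_ms q b s1 P i + v_cv q b s1 s2 eps ra P i) hv.
exists f, (kappa2 q b s1 s2 eps ra P i) => vm z.
rewrite /closed_loop; split; last exact: e4.
rewrite e1; split => //.
Qed.



Section D.
Context {R : realType}.
Implicit Types (f g : R -> R) (t a b : R).

Lemma d_cst t (c : R) : is_derive t 1 (fun _ : R => c) 0.
Proof. exact: is_derive_cst. Qed.

Lemma d_add {f g t a b} : is_derive t 1 f a -> is_derive t 1 g b ->
  is_derive t 1 (fun s => f s + g s) (a + b).
Proof. by move=> h1 h2; have := is_deriveD h1 h2. Qed.

Lemma d_sub {f g t a b} : is_derive t 1 f a -> is_derive t 1 g b ->
  is_derive t 1 (fun s => f s - g s) (a - b).
Proof. by move=> h1 h2; have := is_deriveB h1 h2. Qed.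

Lemma d_mul {f g t a b} : is_derive t 1 f a -> is_derive t 1 g b ->
  is_derive t 1 (fun s => f s * g s) (f t * b + g t * a).
Proof. by move=> h1 h2; have := is_deriveM h1 h2. Qed.

Lemma d_scal {f t a} (c : R) : is_derive t 1 f a ->
  is_derive t 1 (fun s => c * f s) (c * a).
Proof.
move=> h1; have := d_mul (d_cst t c) h1.
by rewrite mulr0 addr0 mulrC.
Qed.

Lemma d_sum {k} {h : 'I_k -> R -> R} {t} {dh : 'I_k -> R} :
  (forall i, is_derive t 1 (h i) (dh i)) ->
  is_derive t 1 (fun s => \sum_(i < k) h i s) (\sum_(i < k) dh i).
Proof. by move=> H; have := is_derive_sum H; rewrite fct_sumE. Qed.

Lemma d_exp {f t a} : is_derive t 1 f a ->
  is_derive t 1 (fun s => expR (f s)) (expR (f t) * a).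
Proof. by move=> h; have := is_derive1_comp (is_derive_expR (f t)) h. Qed.

Lemma d_ln {f t a} : 0 < f t -> is_derive t 1 f a ->
  is_derive t 1 (fun s => ln (f s)) ((f t)^-1 * a).
Proof. by move=> h0 h; have := is_derive1_comp (is_derive1_ln h0) h. Qed.

End D.

Lemma d_comp {R : realType} {d : nat} {f : R -> 'rV[R]_d} {t : R} {v : 'rV[R]_d} (j : 'I_d) :
  is_derive t 1 f v -> is_derive t 1 (fun s => f s 0 j) (v 0 j).
Proof.
move=> [df dv]; have hj := (derivable_mxP f t 1).1 df 0 j.
have := derive_mx df; rewrite dv => ->; rewrite mxE.
exact: derivableP.
Qed.

Lemma d_dot {R : realType} {d : nat} {f g : R -> 'rV[R]_d} {t : R} {vf vg : 'rV[R]_d} :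
  is_derive t 1 f vf -> is_derive t 1 g vg ->
  is_derive t 1 (fun s => dotE (f s) (g s)) (dotE vf (g t) + dotE (f t) vg).
Proof.
move=> hf hg; rewrite /dotE -big_split /=.
apply: d_sum => j; have := d_mul (d_comp j hf) (d_comp j hg).
by rewrite addrC (mulrC (g t 0 j)).
Qed.

Lemma d_vsub {R : realType} {d : nat} {f : R -> 'rV[R]_d} (c : 'rV[R]_d) {t : R} {v : 'rV[R]_d} :
  is_derive t 1 f v -> is_derive t 1 (fun s => c - f s) (- v).
Proof.
move=> h; have := is_deriveB (is_derive_cst c t 1) h.
by rewrite sub0r.
Qed.

Lemma d_vsubr {R : realType} {d : nat} {f : R -> 'rV[R]_d} (c : 'rV[R]_d) {t : R} {v : 'rV[R]_d} :
  is_derive t 1 f v -> is_derive t 1 (fun s => f s - c) v.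
Proof.
move=> h; have := is_deriveB h (is_derive_cst c t 1).
by rewrite subr0.
Qed.



Lemma cont_of_der {R : realType} {h dh : R -> R} {a b : R} :
  (forall t, a <= t -> is_derive t 1 h (dh t)) -> a <= b ->
  forall x y, b <= x -> {within `[x, y], continuous h}.
Proof.
move=> hd ab x y bx; apply: derivable_within_continuous => z.
rewrite in_itv /= => /andP[xz _].
by have [] := hd z (le_trans ab (le_trans bx xz)).
Qed.

Lemma barrier {R : realType} (h dh : R -> R) (a L : R) :
  (forall t, a <= t -> is_derive t 1 h (dh t)) ->
  (forall t, a <= t -> L < h t -> dh t < 0) ->
  forall t, a <= t -> h t <= Num.max (h a) L.
Proof.
move=> hd hneg t2 at2; rewrite leNgt; apply/negP => hbig.
have [c cI cmax] := EVT_max at2 (cont_of_der hd (lexx a) a t2 (lexx a)).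
move: (cI); rewrite in_itv /= => /andP[ac ct2].
have ht2c : h t2 <= h c by apply: cmax; rewrite in_itv /= at2 lexx.
have hcL : L < h c by apply: lt_le_trans ht2c; apply: le_lt_trans hbig; rewrite le_max lexx orbT.
have hca : h a < h c by apply: lt_le_trans ht2c; apply: le_lt_trans hbig; rewrite le_max lexx.
have ac' : a < c by rewrite lt_neqAle ac andbT; apply/eqP => e; rewrite e ltxx in hca.
have [dc _] := hd c ac.
have ccont : {for c, continuous h}.
  exact/differentiable_continuous/derivable1_diffP.
have := cvgr_dist_lt _ _ ccont (h c - L); rewrite subr_gt0 => /(_ _ hcL).
move=> /nbhs_ballP [e /= e0 He].
set y0 := Num.max a (c - e / 2).
have y0c : y0 < c by rewrite /y0 gt_max ac' /=; rewrite ltrBlDr ltrDl divr_gt0.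
have ay0 : a <= y0 by rewrite /y0 le_max lexx.
have hin : forall y, y0 <= y -> y <= c -> L < h y.
  move=> y y0y yc; have : ball c e y.
    rewrite /ball /= ger0_norm ?subr_ge0 //.
    have : c - e / 2 <= y0 by rewrite /y0 le_max lexx orbT.
    lra.
  move/He; rewrite /= => hlt.
  have : h c - h y <= `|h c - h y| := ler_norm _.
  lra.
have hder : forall x, x \in `]y0, c[ -> is_derive x 1 h (dh x).
  move=> x; rewrite in_itv /= => /andP[? ?]; apply: hd.
  by apply: le_trans ay0 _; apply: ltW.
have [xi xiI hmvt] := MVT y0c hder (cont_of_der hd (lexx a) y0 c ay0).
move: (xiI); rewrite in_itv /= => /andP[y0xi xic].
have := hneg xi (le_trans ay0 (ltW y0xi)) (hin xi (ltW y0xi) (ltW xic)).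
have hy0 : h y0 <= h c by apply: cmax; rewrite in_itv /= ay0 (le_trans (ltW y0c) ct2).
move=> hn; have : dh xi * (c - y0) < 0 by rewrite pmulr_llt0 // subr_gt0.
lra.
Qed.

Lemma mvt_lb {R : realType} (h dh : R -> R) (t1 a b L : R) :
  (forall t, t1 <= t -> is_derive t 1 h (dh t)) -> t1 <= a -> a <= b ->
  (forall x, a < x -> x < b -> L <= dh x) -> h a + L * (b - a) <= h b.
Proof.
move=> hd ha ab hL.
have [<-|ab'] := eqVneq a b; first by rewrite subrr mulr0 addr0.
have ab2 : a < b by rewrite lt_neqAle ab' ab.
have hd' : forall x, x \in `]a, b[ -> is_derive x 1 h (dh x).
  move=> x; rewrite in_itv /= => /andP[ax _]; apply: hd.
  exact: le_trans ha (ltW ax).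
have [xi xiI hm] := MVT ab2 hd' (cont_of_der hd (lexx t1) a b ha).
move: xiI; rewrite in_itv /= => /andP[axi xib].
have := hL xi axi xib => hL'.
have : L * (b - a) <= dh xi * (b - a) by rewrite ler_pM2r // subr_gt0.
lra.
Qed.

Lemma barbalat {R : realType} (H dH D : R -> R) (t1 kap vmax : R) :
  0 < kap -> 0 < vmax ->
  (forall t, t1 <= t -> is_derive t 1 H (dH t)) ->
  (forall t, t1 <= t -> kap * D t ^+ 2 <= dH t) ->
  (forall t, 0 <= D t) -> (forall t, H t <= 0) ->
  (forall a b, t1 <= a -> a <= b -> D a - vmax * (b - a) <= D b) ->
  D @ +oo --> (0 : R).
Proof.
move=> kap0 hv hH hdH D0 Hle0 hlip.
have dH0 : forall t, t1 <= t -> 0 <= dH t.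
  move=> t ht; apply: le_trans (hdH t ht).
  by apply: mulr_ge0; [apply: ltW | apply: sqr_ge0].
have Hmono : forall a b, t1 <= a -> a <= b -> H a <= H b.
  move=> a b ha ab; have := mvt_lb H dH t1 a b 0 hH ha ab.
  rewrite mul0r addr0; apply => x ax _; apply: dH0.
  exact: le_trans ha (ltW ax).
apply/cvgrPdist_le => e e0.
have [[T hT]|hno] := pselect (exists T, forall t, T < t -> D t <= e).
  exists T; split; first exact: num_real.
  by move=> t /hT h; rewrite sub0r normrN ger0_norm.
exfalso.
have hno' : forall T, exists t, T < t /\ e < D t.
  move=> T; apply: contrapT => hc; apply: hno; exists T => t hTt.
  rewrite leNgt; apply/negP => hlt; apply: hc; exists t; split => //.
set del := e / (2 * vmax).
have del0 : 0 < del by rewrite divr_gt0 // mulr_gt0.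
have vdel : vmax * del = e / 2 by rewrite /del; field; rewrite gt_eqF.
set L := kap * (e / 2) ^+ 2.
have L0 : 0 < L by rewrite mulr_gt0 // exprn_gt0 // divr_gt0.
set eta := L * del.
have eta0 : 0 < eta by rewrite mulr_gt0.
have step : forall T, t1 <= T -> exists T', t1 <= T' /\ H T + eta <= H T'.
  move=> T hT; have [t [hTt het]] := hno' T.
  have ht1 : t1 <= t by apply: le_trans hT (ltW hTt).
  have tu : t <= t + del by rewrite lerDl ltW.
  exists (t + del); split; first exact: le_trans ht1 tu.
  have hmono := Hmono T t hT (ltW hTt).
  have hstep : H t + L * del <= H (t + del).
    have := mvt_lb H dH t1 t (t + del) L hH ht1 tu.
    rewrite addrAC subrr add0r; apply => x tx xu.
    have hx1 : t1 <= x by apply: le_trans ht1 (ltW tx).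
    apply: le_trans (hdH x hx1); rewrite ler_pM2l //.
    have hl := hlip t x ht1 (ltW tx).
    have : vmax * (x - t) <= vmax * del.
      rewrite ler_pM2l //; lra.
    move=> hvx.
    have he2 : e / 2 <= D x by lra.
    rewrite ler_sqr ?nnegrE //; apply: ltW; exact: divr_gt0.
  rewrite /eta; lra.
have iter : forall N : nat, exists T, t1 <= T /\ H t1 + N%:R * eta <= H T.
  elim=> [|N [T [hT hH']]]; first by exists t1; rewrite mul0r addr0.
  have [T' [hTT' h']] := step T hT; exists T'; split => //.
  rewrite -addn1 natrD mulrDl mul1r; lra.
have [T [_ hN]] := iter (Num.trunc (- H t1 / eta)).+1.
have h2 := truncnS_gt (- H t1 / eta).
have h1 := Hle0 T.
have : - H t1 / eta * eta < (Num.trunc (- H t1 / eta)).+1%:R * eta by rewrite ltr_pM2r.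
rewrite divfK ?gt_eqF //; lra.
Qed.



Lemma d_eqv {R : realType} {f : R -> R} {t a : R} (b : R) : is_derive t 1 f a -> a = b -> is_derive t 1 f b.
Proof. by move=> h <-. Qed.

Lemma d_kw {R : realType} {d : nat} (b : R) (qk : 'rV[R]_d) {f : R -> 'rV[R]_d} {t : R} {v : 'rV[R]_d} :
  is_derive t 1 f v ->
  is_derive t 1 (fun s => kw b qk (f s)) (kw b qk (f t) * (2 * b * dotE (qk - f t) v)).
Proof.
move=> H.
have -> : (fun s => kw b qk (f s)) = fun s => expR (- b * dotE (qk - f s) (qk - f s)).
  by apply/funext => s; rewrite kwE.
apply: d_eqv; first exact: d_exp (d_scal (- b) (d_dot (d_vsub qk H) (d_vsub qk H))).
rewrite -kwE; congr (_ * _).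
rewrite dotENl (dotEC _ (- v)) dotENl dotEC. lra.
Qed.

Lemma d_mass {R : realType} {d n m : nat} (q : 'I_m -> 'rV[R]_d) (b : R)
  (p : 'I_n -> R -> 'rV[R]_d) (V : 'I_n -> 'rV[R]_d) (t : R) (k : 'I_m) :
  (forall j, is_derive t 1 (p j) (V j)) ->
  is_derive t 1 (fun s => mass q b (fun j => p j s) k)
    (n%:R^-1 * \sum_(j < n) kw b (q k) (p j t) * (2 * b * dotE (q k - p j t) (V j))).
Proof.
move=> H; rewrite /mass; apply: d_scal; apply: d_sum => j; exact: d_kw.
Qed.

Lemma d_H {R : realType} {d n m : nat} (q : 'I_m -> 'rV[R]_d) (b : R)
  (p : 'I_n -> R -> 'rV[R]_d) (V : 'I_n -> 'rV[R]_d) (t : R) (i : 'I_n) :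
  (forall j, is_derive t 1 (p j) (V j)) ->
  is_derive t 1 (fun s => \sum_(k < m) ln (mass q b (fun j => p j s) k))
    (2 * b / n%:R * \sum_(j < n) dotE (Uv q b (fun j => p j t) j) (V j)).
Proof.
move=> H; apply: d_eqv.
  apply: d_sum => k; apply: d_ln; last exact: d_mass.
  exact: (mass_gt0 _ _ _ i).
rewrite [RHS]mulr_sumr; under eq_bigr => k _ do rewrite mulr_sumr.
under eq_bigr => k _ do rewrite mulr_sumr.
rewrite exchange_big /=; apply: eq_bigr => j _.
rewrite /Uv dotE_suml mulr_sumr; apply: eq_bigr => k _.
rewrite dotEZl /wgt; lra.
Qed.



Lemma Uv_cl_lb {R : realType} {d n m : nat} (q : 'I_m -> 'rV[R]_d)
  (b s1 s2 eps ra vmax Z : R) (P : 'I_n -> 'rV[R]_d) j :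
  (0 < m)%N -> 0 < s1 -> 0 < s2 -> 0 < eps < 1 -> 0 < ra -> 0 < vmax ->
  normE (v_ms q b s1 P j) + s2 * (n%:R * ra) <= Z ->
  Wt q b P j / (s1 / m%:R) * (vmax / (vmax + Z)) * (eps * normE (v_ms q b s1 P j) ^+ 2)
  <= dotE (Uv q b P j) (closed_loop q b s1 s2 eps ra vmax P j).
Proof.
move=> m0 hs1 hs2 he hr hv hZ.
have W0 := Wt_gt0 q b P j (Ordinal m0).
have sm : 0 < s1 / m%:R by rewrite divr_gt0 // ltr0n.
have [f [k [[e1 /andP[f0 f1] e3 /andP[k0 k1] e5] _]]] := cl_decomp q b s1 s2 eps ra vmax P j he hv.
set vm := v_ms q b s1 P j in hZ e3 e5 e1 *.
set vr := v_rep s2 eps ra P j in e1 e3 e5.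
have hU : Uv q b P j = (Wt q b P j / (s1 / m%:R)) *: vm.
  by rewrite /vm v_msE scalerA mulrA divfK ?gt_eqF // mulfV ?gt_eqF // scale1r.
rewrite e1 hU dotEZl dotEZr.
have hvr := vrep_bound s2 eps ra P j hs2 (proj1 (andP he)) hr; rewrite -/vr in hvr.
have hz : normE (vm + k *: vr) <= Z.
  apply: le_trans (normED _ _) _; apply: le_trans hZ; rewrite lerD2l normEZ ger0_norm //.
  have := normE_ge0 vr; nra.
have Z0 : 0 < vmax + Z by have := normE_ge0 (vm + k *: vr); lra.
have hf : vmax / (vmax + Z) <= f.
  rewrite ler_pdivrMr //; apply: le_trans e3 _; rewrite ler_pM2l //; lra.
have e0 : 0 <= eps * normE vm ^+ 2 by rewrite mulr_ge0 ?sqr_ge0 // ltW // (proj1 (andP he)).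
rewrite -mulrA ler_pM2l ?divr_gt0 //.
apply: le_trans (_ : f * (eps * normE vm ^+ 2) <= _).
  by rewrite ler_wpM2r.
  by rewrite ler_pM2l.
by rewrite ltr0n.
Qed.

Lemma distE_ge0 {R : realType} {d : nat} (x : 'rV[R]_d) (S : set 'rV[R]_d) :
  S !=set0 -> 0 <= distE x S.
Proof.
move=> [s hs]; apply: lb_le_inf; first by exists (normE (x - s)), s.
by move=> _ [y _ <-]; apply: normE_ge0.
Qed.

Lemma distE_le {R : realType} {d : nat} (x s : 'rV[R]_d) (S : set 'rV[R]_d) :
  S s -> distE x S <= normE (x - s).
Proof.
move=> hs; have hl : has_lbound [set normE (x - s) | s in S].
  by exists 0 => _ [y _ <-]; apply: normE_ge0.
by apply: (ge_inf hl); exists s.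
Qed.

Lemma distE_lip {R : realType} {d : nat} (x y : 'rV[R]_d) (S : set 'rV[R]_d) :
  S !=set0 -> distE x S - normE (x - y) <= distE y S.
Proof.
move=> [s hs]; apply: lb_le_inf; first by exists (normE (y - s)), s.
move=> _ [z hz <-]; rewrite lerBlDr.
apply: le_trans (distE_le x z S hz) _.
have -> : x - z = (x - y) + (y - z) by rewrite addrA subrK.
by apply: le_trans (normED _ _) _; rewrite addrC.
Qed.



Lemma dotE0r {R : realType} {d : nat} (w : 'rV[R]_d) : dotE w 0 = 0.
Proof. by rewrite dotEC dotE0l. Qed.

Lemma p_lip {R : realType} {d : nat} (f V : R -> 'rV[R]_d) (a vmax : R) :
  (forall t, a <= t -> is_derive t 1 f (V t)) ->
  (forall t, a <= t -> normE (V t) <= vmax) ->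
  forall u t, a <= u -> u <= t -> normE (f t - f u) <= vmax * (t - u).
Proof.
move=> hd hV u t au ut.
have [<-|ut'] := eqVneq u t.
  by rewrite subrr normE0 subrr mulr0.
have ut2 : u < t by rewrite lt_neqAle ut' ut.
set w := f t - f u.
pose g s := dotE (f s - f u) w.
pose dg s := dotE (V s) w + dotE (f s - f u) 0.
have hg : forall s, a <= s -> is_derive s 1 g (dg s).
  move=> s hs; exact: d_dot (d_vsubr (f u) (hd s hs)) (is_derive_cst w s 1).
have hder : forall x, x \in `]u, t[ -> is_derive x 1 g (dg x).
  move=> x; rewrite in_itv /= => /andP[ux _]; apply: hg.
  exact: le_trans au (ltW ux).
have [xi xiI hm] := MVT ut2 hder (cont_of_der hg au u t (lexx u)).
move: xiI; rewrite in_itv /= => /andP[uxi _].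
have hax : a <= xi by apply: le_trans au (ltW uxi).
move: hm; rewrite /g /dg subrr dotE0l dotE0r addr0 subr0 -/w -normE_sq.
have := CS (V xi) w; have := hV xi hax; have := normE_ge0 w; have := normE_ge0 (V xi).
set A := normE w; set B := normE (V xi); set C := dotE (V xi) w => h1 h2 h3 h4 hm.
have h5 : A ^+ 2 <= vmax * A * (t - u).
  rewrite hm; rewrite ler_pM2r ?subr_gt0 //; apply: le_trans h4 _; rewrite mulrC; nra.
have [A0|A0] := eqVneq A 0; first by rewrite A0 mulr_ge0 ?subr_ge0 //; lra.
have Ap : 0 < A by rewrite lt_neqAle eq_sym A0 h2.
rewrite expr2 in h5; nra.
Qed.



Lemma conv_comb' {R : realType} {d : nat} (S : set 'rV[R]_d) : convex_setE S ->
  forall m (w : 'I_m -> R) (x : 'I_m -> 'rV[R]_d), (0 < m)%N ->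
  (forall k, 0 < w k) -> (forall k, S (x k)) ->
  S ((\sum_(k < m) w k)^-1 *: \sum_(k < m) w k *: x k).
Proof. by move=> hS; case=> // m w x _; exact: conv_comb. Qed.

Lemma dist_vms {R : realType} {d n m : nat} (q : 'I_m -> 'rV[R]_d) (b s1 : R)
  (P : 'I_n -> 'rV[R]_d) i (S : set 'rV[R]_d) : (0 < m)%N -> 0 < s1 ->
  convex_setE S -> (forall k, S (q k)) ->
  s1 / m%:R * distE (P i) S <= normE (v_ms q b s1 P i).
Proof.
move=> m0 s0 hS hq.
have sm : 0 < s1 / m%:R by rewrite divr_gt0 // ltr0n.
rewrite (vms_qbar _ _ _ _ _ m0) normEZ (ger0_norm (ltW sm)) ler_pM2l // normEB.
apply: distE_le; apply: conv_comb' => //; exact: wgt_gt0.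
Qed.

Theorem theorem4 (R : realType) (d n m : nat) (hn : (2 <= n)%N) (hm : (0 < m)%N)
  (q : 'I_m -> 'rV[R]_d)
  (beta sigma1 sigma2 eps ravoid vmax : R)
  (hbeta : 0 < beta) (hs1 : 0 < sigma1) (hs2 : 0 < sigma2)
  (heps : 0 < eps < 1) (hr : 0 < ravoid) (hv : 0 < vmax)
  (S : set 'rV[R]_d) (hSclosed : closed S) (hSconv : convex_setE S)
  (hqS : forall k, S (q k))
  (t0 : R) (p : 'I_n -> R -> 'rV[R]_d)
  (hcont : forall i, {within `[t0, +oo[, continuous (p i)})
  (hode : forall i t, t0 < t ->
     is_derive t 1 (p i)
       (closed_loop q beta sigma1 sigma2 eps ravoid vmax (fun j => p j t) i)) :
  forall i, (fun t => distE (p i t) S) @ +oo --> (0 : R).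
Proof.
move=> i.
have he0 : 0 < eps by case/andP: heps.
set s := sigma1 / m%:R.
have s0 : 0 < s by rewrite divr_gt0 // ltr0n.
set k0 := Ordinal hm.
set c := q k0.
set C := sigma2 * (n%:R * ravoid).
have C0 : 0 <= C by rewrite mulr_ge0 ?mulr_ge0 ?ler0n // ltW.
set Q0 := \sum_(l < m) normE (q l - c).
have Q00 : 0 <= Q0 by apply: sumr_ge0 => l _; apply: normE_ge0.
set t1 := t0 + 1.
pose P t := fun j => p j t.
pose V j t := closed_loop q beta sigma1 sigma2 eps ravoid vmax (P t) j.
have hder : forall j t, t1 <= t -> is_derive t 1 (p j) (V j t).
  by move=> j t ht; apply: hode; rewrite /t1 in ht; lra.
have hVb : forall j t, normE (V j t) <= vmax.
  move=> j t; have [f [k [_ h]]] := cl_decomp q beta sigma1 sigma2 eps ravoid vmax (P t) j heps hv.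
  exact: h.
pose hh t := dotE (p i t - c) (p i t - c).
pose dhh t := dotE (V i t) (p i t - c) + dotE (p i t - c) (V i t).
set Rb := Q0 + C / s.
have Rb0 : 0 <= Rb by rewrite addr_ge0 // divr_ge0 // ltW.
have H1 : forall t, t1 <= t -> is_derive t 1 hh (dhh t).
  by move=> t ht; exact: d_dot (d_vsubr c (hder i t ht)) (d_vsubr c (hder i t ht)).
have H2 : forall t, t1 <= t -> Rb ^+ 2 < hh t -> dhh t < 0.
  move=> t ht hlt; rewrite /hh -normE_sq in hlt.
  set x := p i t - c in hlt *.
  have hx : Rb < normE x by have := normE_ge0 x; nra.
  have [f [k [[e1 /andP[f0 f1] e3 /andP[k0' k1] e5] _]]] :=
    cl_decomp q beta sigma1 sigma2 eps ravoid vmax (P t) i heps hv.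
  rewrite /dhh /V e1 (dotEC (f *: _)) dotEZr dotEDr dotEZr.
  have hc := vms_center q beta sigma1 (P t) i c hm hs1; rewrite /= -/x -/s -/Q0 in hc.
  have hvr := vrep_bound sigma2 eps ravoid (P t) i hs2 he0 hr; rewrite -/C in hvr.
  have hcs := CS x (v_rep sigma2 eps ravoid (P t) i).
  set A := dotE x (v_ms q beta sigma1 (P t) i) in hc *.
  set B := dotE x (v_rep sigma2 eps ravoid (P t) i) in hcs *.
  set X := normE x in hx hc hcs *.
  set Y := normE (v_rep sigma2 eps ravoid (P t) i) in hvr hcs.
  have hY : 0 <= Y := normE_ge0 _.
  have hCs : s * (C / s) = C by rewrite mulrC divfK // gt_eqF.
  have X0 : 0 <= X by lra.
  have XY : X * Y <= X * C by rewrite ler_wpM2l.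
  have hkB : k * B <= X * C.
    have [B0|B0] := leP 0 B.
      have : k * B <= B by rewrite ler_piMl.
      lra.
    have : k * B <= 0 by rewrite mulr_ge0_le0 // ltW.
    nra.
  have : A + k * B < 0.
    have he : s * (X * (Q0 - X)) + X * C = s * X * (Rb - X).
      by rewrite /Rb; field; rewrite gt_eqF.
    have sX : 0 < s * X by rewrite mulr_gt0 //; lra.
    have : s * X * (Rb - X) < 0 by rewrite pmulr_rlt0 // subr_lt0.
    lra.
  move=> hneg; nra.
have hbar := barrier hh dhh t1 (Rb ^+ 2) H1 H2.
set M := Num.max (hh t1) (Rb ^+ 2) in hbar.
have M0 : 0 <= M by rewrite le_max sqr_ge0 orbT.
have hxb : forall t, t1 <= t -> normE (p i t - c) <= 1 + M.
  move=> t ht; have := hbar t ht; rewrite /hh -normE_sq.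
  have := normE_ge0 (p i t - c); set X := normE _ => X0 hX; nra.
set Bd := 1 + M.
set VM := s * (Q0 + m%:R * Bd).
set Z := VM + C.
have hvm : forall t, t1 <= t -> normE (v_ms q beta sigma1 (P t) i) <= VM.
  move=> t ht; apply: le_trans (vms_bound q beta sigma1 (P t) i hm hs1) _.
  rewrite -/s ler_pM2l //=.
  apply: le_trans (_ : \sum_(l < m) (normE (q l - c) + Bd) <= _).
    apply: ler_sum => l _.
    have -> : q l - p i t = (q l - c) + (c - p i t) by rewrite addrA subrK.
    apply: le_trans (normED _ _) _; rewrite lerD2l normEB; exact: hxb.
  by rewrite big_split /= sumr_const card_ord mulr_natl.
set w0 := expR (- beta * M).
have w00 : 0 < w0 := expR_gt0 _.
have hW : forall t, t1 <= t -> w0 <= Wt q beta (P t) i.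
  move=> t ht; apply: le_trans (Wt_lb q beta (P t) i k0 (ltW hbeta)).
  rewrite /w0 /kw ler_expR /= -/c normEB.
  have := hbar t ht; rewrite /hh -normE_sq => h.
  by rewrite !mulNr lerN2 ler_pM2l.
pose H t := \sum_(k < m) ln (mass q beta (fun j => p j t) k).
pose dH t := 2 * beta / n%:R * \sum_(j < n) dotE (Uv q beta (P t) j) (V j t).
have hH : forall t, t1 <= t -> is_derive t 1 H (dH t).
  by move=> t ht; exact: d_H q beta p (fun j => V j t) t i (fun j => hder j t ht).
have Hle0 : forall t, H t <= 0.
  move=> t; apply: sumr_le0 => k _; apply: ln_le0.
  exact: (mass_le1 _ _ _ i) (ltW hbeta).
have n0 : 0 < n%:R :> R by rewrite ltr0n (leq_ltn_trans (leq0n _) (ltn_ord i)).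
have Z0 : 0 < vmax + Z.
  have : 0 <= VM by rewrite /VM mulr_ge0 ?(ltW s0) // addr_ge0 // mulr_ge0 ?ler0n // /Bd; lra.
  rewrite /Z; lra.
set F := vmax / (vmax + Z).
have F0 : 0 < F by rewrite divr_gt0.
set kap := 2 * beta / n%:R * (w0 / s * F * (eps * s ^+ 2)).
have kap0 : 0 < kap.
  apply: mulr_gt0; first by apply: divr_gt0 => //; apply: mulr_gt0.
  apply: mulr_gt0; first by apply: mulr_gt0 => //; apply: divr_gt0.
  by apply: mulr_gt0 => //; apply: exprn_gt0.
have hdH : forall t, t1 <= t -> kap * distE (p i t) S ^+ 2 <= dH t.
  move=> t ht.
  have hj : forall j, 0 <= dotE (Uv q beta (P t) j) (V j t).
    move=> j; apply: le_trans (Uv_cl_lb q beta sigma1 sigma2 eps ravoid vmax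
      (normE (v_ms q beta sigma1 (P t) j) + C) (P t) j hm hs1 hs2 heps hr hv (lexx _)).
    have Wj := Wt_gt0 q beta (P t) j k0.
    have := normE_ge0 (v_ms q beta sigma1 (P t) j); set Y := normE _ => Y0.
    have hp : 0 < Wt q beta (P t) j / (sigma1 / m%:R) * (vmax / (vmax + (Y + C))).
      apply: mulr_gt0; apply: divr_gt0 => //; lra.
    apply: mulr_ge0; first exact: ltW.
    by apply: mulr_ge0; [exact: ltW | exact: sqr_ge0].
  rewrite /dH /kap -mulrA ler_pM2l ?divr_gt0 ?mulr_gt0 //.
  rewrite (bigD1 i) //=; apply: ler_wpDr; first by apply: sumr_ge0 => j _.
  have hz : normE (v_ms q beta sigma1 (P t) i) + C <= Z by rewrite lerD2r hvm.
  apply: le_trans (Uv_cl_lb q beta sigma1 sigma2 eps ravoid vmax Z (P t) i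
     hm hs1 hs2 heps hr hv hz); rewrite -/s -/F.
  have hd := dist_vms q beta sigma1 (P t) i S hm hs1 hSconv hqS; rewrite -/s /= in hd.
  have D0 : 0 <= distE (p i t) S by apply: distE_ge0; exists c; apply: hqS.
  have -> : w0 / s * F * (eps * s ^+ 2) * distE (p i t) S ^+ 2 =
    (w0 / s * F) * (eps * (s * distE (p i t) S) ^+ 2) by rewrite /=; ring.
  apply: ler_pM.
  - by apply: mulr_ge0; [apply: divr_ge0|]; apply: ltW.
  - by apply: mulr_ge0; [apply: ltW | apply: sqr_ge0].
  - by rewrite ler_pM2r // ler_pM2r ?invr_gt0 // hW.
  - have sD : 0 <= s * distE (p i t) S by apply: mulr_ge0 => //; apply: ltW.
    rewrite ler_pM2l //; rewrite ler_sqr ?nnegrE //; exact: normE_ge0.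
have Sne : S !=set0 by exists c; apply: hqS.
apply: (barbalat H dH (fun t => distE (p i t) S) t1 kap vmax kap0 hv hH hdH _ Hle0).
  by move=> t; apply: distE_ge0.
move=> a b ha ab /=.
apply: le_trans (distE_lip (p i a) (p i b) S Sne).
rewrite lerD2l lerN2 normEB.
exact: (p_lip (p i) (V i) t1 vmax (fun t ht => hder i t ht) (fun t _ => hVb i t) a b ha ab).
Qed.
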